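(* Let $\mathcal{M}$ be a circular orientable embedding of a connected graph $X$ with $n$ vertices, $\ell$ edges and $s$ faces, and let $U$ be its vertex-face transition matrix. If either $X$ or its dual graph is regular, then \[\operatorname{tr}(U)=2\left(\frac{ns}{\ell}-(n+s-\ell)\right).\]
   Context: Setting. A circular embedding is a cellular embedding in which every face is bounded by a cycle. Arcs are ordered pairs $(u,v)$ with $\{u,v\}$ an edge, and $u$ is the tail. Vertex-face transition matrix. Fix a consistent orientation of the faces: for each edge shared by two faces, the two faces give it opposite directions. Then every arc lies in exactly one facial walk. Let $M$ be the arc-face incidence matrix and $N$ the arc-tail incidence matrix ($N_{(a,b),u}=1$ iff $a=u$). Let $\widehat M,\widehat N$ be these matrices with columns scaled to unit length. The vertex-face transition matrix is $U=(2\widehat M\widehat M^T-I)(2\widehat N\widehat N^T-I)$. The dual graph has the faces as vertices, with two faces adjacent for each edge they share. *)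

(* Defs.v *)
(* Orientable cellular embeddings of a connected simple graph
   are encoded by rotation systems (Heffter--Edmonds). *)
From HB Require Import structures.
From mathcomp Require Import all_boot all_order all_algebra all_fingroup.
Set Implicit Arguments. Unset Strict Implicit. Unset Printing Implicit Defensive.
Import Order.TTheory GRing.Theory Num.Theory.
Local Open Scope ring_scope.

Definition Arc (V : finType) (adj : rel V) := {p : V * V | adj p.1 p.2}.
HB.instance Definition _ (V : finType) (adj : rel V) :=
  Finite.copy (Arc adj) {p : V * V | adj p.1 p.2}.

Section Embedding.
Variables (V : finType) (adj : rel V).
Local Notation Arc := (Arc adj).
Definition arc_tail (a : Arc) : V := (val a).1.
Definition arc_head (a : Arc) : V := (val a).2.

Definition edges : {set {set V}} :=
  [set [set p.1; p.2] | p in [set p : V * V | adj p.1 p.2]].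

Definition connected_graph : Prop := forall u v : V, connect adj u v.

Definition regular_graph : Prop :=
  exists k : nat, forall v : V, #|[set u | adj v u]| = k.

Variable (adj_sym : symmetric adj).

Definition rev_arc (a : Arc) : Arc :=
  @exist _ (fun p : V * V => adj p.1 p.2) ((val a).2, (val a).1)
    (eq_ind _ is_true (valP a) _ (adj_sym (val a).1 (val a).2)).

Definition rotation_system (rho : {perm Arc}) : Prop :=
  (forall a, arc_tail (rho a) = arc_tail a) /\
  (forall a b, arc_tail a = arc_tail b -> fconnect rho a b).

Variable rho : {perm Arc}.

(* facial successor: after traversing (u,v) we continue with the next Arc at v *)
Definition face_step (a : Arc) : Arc := rho (rev_arc a).

Definition face_of (a : Arc) : {set Arc} := [set b | fconnect face_step a b].
Definition faces : {set {set Arc}} := [set face_of a | a : Arc].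

(* circular: every facial walk is a cycle (distinct vertices, length >= 3) *)
Definition circular : Prop :=
  forall a : Arc, uniq [seq arc_tail b | b <- fingraph.orbit face_step a] /\
                  (3 <= size (fingraph.orbit face_step a))%N.

(* degree of a face f in the dual graph: each edge {a, rev a} contributes
   [face a = f] + [face (rev a) = f], i.e. the number of arcs on f *)
Definition dual_deg (f : {set Arc}) : nat := #|[set a | face_of a == f]|.
Definition dual_regular : Prop :=
  exists k : nat, forall f, f \in faces -> dual_deg f = k.

Variable R : rcfType.
Local Notation nA := #|{: Arc}|.
Local Notation nF := #|faces|.
Local Notation nV := #|V|.

Definition inc_M : 'M[R]_(nA, nF) :=
  \matrix_(i, j) (if enum_val i \in (enum_val j : {set Arc}) then 1 else 0).
Definition inc_N : 'M[R]_(nA, nV) :=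
  \matrix_(i, j) (if arc_tail (enum_val i) == enum_val j then 1 else 0).

End Embedding.

Definition col_normalize (R : rcfType) m n (A : 'M[R]_(m, n)) : 'M[R]_(m, n) :=
  \matrix_(i, j) (A i j / Num.sqrt (\sum_(k < m) A k j ^+ 2)).

Definition vf_transition (V : finType) (adj : rel V) (adj_sym : symmetric adj)
    (rho : {perm Arc adj}) (R : rcfType) : 'M[R]_(#|{: Arc adj}|) :=
  let Mh := col_normalize (inc_M adj_sym rho R) in
  let Nh := col_normalize (inc_N adj R) in
  (2%:R *: (Mh *m Mh^T) - 1%:M) *m (2%:R *: (Nh *m Nh^T) - 1%:M).

(* Main.v *)
Require Import Defs.
From mathcomp Require Import all_boot all_order all_algebra all_fingroup.
From mathcomp Require Import ring.
Import GRing.Theory Num.Theory.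
Local Open Scope ring_scope.

Lemma sum_enum_val (R : rcfType) (T : finType) (A : {pred T}) (F : T -> R) :
  \sum_(k < #|A|) F (enum_val k) = \sum_(x in A) F x.
Proof. by rewrite (@big_enum_val _ _ _ _ A F). Qed.

Lemma sum_enum_valT (R : rcfType) (T : finType) (F : T -> R) :
  \sum_(k < #|T|) F (enum_val k) = \sum_x F x.
Proof. rewrite (@sum_enum_val R T T F). by apply: eq_bigl. Qed.

Lemma sum_preim (R : rcfType) (I T : finType) (g : I -> T) (h : T -> R) :
  \sum_(i : I) h (g i) / #|[set j | g j == g i]|%:R = \sum_(y in [set g i | i in I]) h y.
Proof.
rewrite (partition_big_imset g); apply: eq_bigr => y /imsetP [i0 _ ->].
rewrite (eq_bigr (fun _ => h (g i0) / #|[set j | g j == g i0]|%:R)); last first.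
  by move=> i /andP [_ /eqP ->].
rewrite (eq_bigl (mem [set j | g j == g i0])); last by move=> i; rewrite !inE.
rewrite sumr_const -mulr_natr.
have : (0 < #|[set j | g j == g i0]|)%N by apply/card_gt0P; exists i0; rewrite inE.
rewrite lt0n => H.
have H' : (#|[set j | g j == g i0]|%:R : R) != 0 by rewrite pnatr_eq0.
field; exact H'.
Qed.

Lemma tr_gen (R : rcfType) n (P Q : 'M[R]_n) :
  \tr ((2%:R *: P - 1%:M) *m (2%:R *: Q - 1%:M)) =
  4%:R * \tr (P *m Q) - 2%:R * \tr P - 2%:R * \tr Q + n%:R.
Proof.
rewrite mulmxBl !mulmxBr !mul1mx !mulmx1 -scalemxAl -scalemxAr scalerA.
rewrite !mxtraceD !raddfN /= !mxtraceD !raddfN /= !mxtraceZ mxtrace1 -natrM; ring.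
Qed.

Lemma uniq_map_in (T1 T2 : eqType) (f : T1 -> T2) (s : seq T1) x y :
  uniq (map f s) -> x \in s -> y \in s -> f x = f y -> x = y.
Proof.
elim: s => [//|z s IH] /= /andP [Hn Hu].
rewrite !inE => /orP [/eqP ->|Hx] /orP [/eqP ->|Hy] //.
- by move=> E; move: Hn; rewrite E (map_f f Hy).
- by move=> E; move: Hn; rewrite -E (map_f f Hx).
- exact: IH.
Qed.

Section S.
Variables (V : finType) (adj : rel V) (adj_sym : symmetric adj) (adj_irr : irreflexive adj)
  (rho : {perm Arc adj}).
Local Notation Arc := (Arc adj).
Local Notation fs := (face_step adj_sym rho).
Local Notation fo := (face_of adj_sym rho).
Local Notation rv := (rev_arc adj_sym).

Lemma rvK : involutive rv.
Proof. by move=> [[x y] h]; apply: val_inj. Qed.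

Lemma fs_inj : injective fs.
Proof. move=> a b /perm_inj; exact: (can_inj rvK). Qed.

Lemma fo_mem a b : (b \in fo a) = (fo a == fo b).
Proof.
rewrite inE; apply/idP/eqP => [H|E]; last first.
  have H : b \in fo b by rewrite inE connect0.
  by rewrite -E inE in H.
apply/setP => c; rewrite !inE.
exact: (same_connect (fconnect_sym fs_inj) H).
Qed.

Lemma fo_self a : a \in fo a.
Proof. by rewrite fo_mem. Qed.

Lemma circ_inj (Hc : circular adj_sym rho) a b :
  fo a = fo b -> arc_tail a = arc_tail b -> a = b.
Proof.
move=> Hf Ht; have [Hu _] := Hc a.
have Ha : a \in fingraph.orbit fs a by rewrite -fconnect_orbit connect0.
have Hb : b \in fingraph.orbit fs a.
  by rewrite -fconnect_orbit; have := fo_self b; rewrite -Hf inE.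
exact: (uniq_map_in _ _ (fun b => arc_tail b) _ a b Hu Ha Hb Ht).
Qed.

Lemma tail_surj (Hconn : connected_graph adj) (He : exists u v, adj u v) v :
  exists a : Arc, arc_tail a = v.
Proof.
have [x [y Hxy]] := He.
have [Evx|Nvx] := eqVneq v x.
  by exists (exist (fun p : V * V => adj p.1 p.2) (x, y) Hxy); rewrite Evx.
have /connectP [p Hp Hl] := Hconn v x.
case: p Hp Hl => [/= _ E|z p /= /andP [Hz _] _]; first by rewrite E eqxx in Nvx.
by exists (exist (fun p : V * V => adj p.1 p.2) (v, z) Hz).
Qed.

Variable R : rcfType.

Lemma faces_sum :
  \sum_(a : Arc) (1 : R) / #|fo a|%:R = #|faces adj_sym rho|%:R.
Proof.
have E a : fo a = [set j | fo j == fo a].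
  by apply/setP => j; rewrite [in RHS]inE fo_mem eq_sym.
rewrite (eq_bigr (fun a => (fun _ => (1:R)) (fo a) / #|[set j | fo j == fo a]|%:R)); last first.
  by move=> a _; rewrite -E.
rewrite (sum_preim R Arc _ (fun a => fo a) (fun _ => (1:R))) sumr_const.
by rewrite /faces.
Qed.


Definition deg (v : V) := #|[set b : Arc | arc_tail b == v]|.

Lemma verts_sum (Hs : forall v, exists a : Arc, arc_tail a = v) :
  \sum_(a : Arc) (1 : R) / (deg (arc_tail a))%:R = #|V|%:R.
Proof.
rewrite (sum_preim R Arc V (fun a => arc_tail a) (fun _ => (1:R))) sumr_const.
congr (_ *+ _); rewrite -cardsT; apply: eq_card => v.
rewrite [in RHS]inE; have [a <-] := Hs v; exact: imset_f.
Qed.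

Definition edg (a : Arc) : {set V} := [set arc_tail a; arc_head a].

Lemma edg_pre a : [set j | edg j == edg a] = [set a; rv a].
Proof.
apply/setP => b; rewrite !inE.
move: a b => [[x y] hxy] [[u w] huw].
rewrite /edg /arc_tail /arc_head -!val_eqE /= !xpair_eqE.
have nxy : x != y by apply: contraTneq hxy => ->; rewrite adj_irr.
have nuw : u != w by apply: contraTneq huw => ->; rewrite adj_irr.
apply/idP/idP => [/eqP/val_inj E|].
  have Hu := set21 u w; have Hw := set22 u w; rewrite E in Hu Hw.
  move: Hu Hw; rewrite !inE.
  case/orP => /eqP Eu; case/orP => /eqP Ew; subst; rewrite ?eqxx ?orbT //=;
  by rewrite eqxx in nuw.
case/orP => /andP [/eqP -> /eqP ->] //.
by rewrite setUC.
Qed.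

Lemma edges_sum :
  \sum_(a : Arc) (1 : R) / 2%:R = #|edges adj|%:R.
Proof.
have E a : 2%N = #|[set j | edg j == edg a]|.
  rewrite edg_pre cards2; congr (_.+1); apply/eqP.
  move: a => [[x y] hxy]; rewrite -val_eqE /= xpair_eqE.
  have nxy : x != y by apply: contraTneq hxy => ->; rewrite adj_irr.
  by rewrite (negbTE nxy).
rewrite (eq_bigr (fun a => (fun _ => (1:R)) (edg a) / #|[set j | edg j == edg a]|%:R)); last first.
  by move=> a _; rewrite -E.
rewrite (sum_preim R Arc _ edg (fun _ => (1:R))) sumr_const.
congr (_ *+ _); apply: eq_card => e.
  apply/imsetP/imsetP => [[a _ ->]|[p Hp ->]].
    by exists (val a); rewrite ?inE ?(valP a).
  rewrite inE in Hp.
  by exists (exist (fun p : V * V => adj p.1 p.2) p Hp).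
Qed.


Notation dg := deg.
Lemma sqrt_sq (c : nat) : (0 < c)%N ->
  forall b b' : R, b / Num.sqrt c%:R * (b' / Num.sqrt c%:R) = b * b' / c%:R.
Proof.
move=> Hc b b'.
have hs : Num.sqrt (c%:R : R) * Num.sqrt c%:R = c%:R by rewrite -expr2 sqr_sqrtr // ler0n.
have hn : Num.sqrt (c%:R : R) != 0 by rewrite sqrtr_eq0 -Order.TotalTheory.ltNge ltr0n.
transitivity (b * b' / (Num.sqrt (c%:R : R) * Num.sqrt c%:R)); last by rewrite hs.
field; exact hn.
Qed.

Lemma normS (S : {set Arc}) :
  \sum_(k < #|{: Arc}|) (if enum_val k \in S then (1:R) else 0) ^+ 2 = #|S|%:R.
Proof.
rewrite (sum_enum_valT R Arc (fun a => (if a \in S then (1:R) else 0) ^+ 2)).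
rewrite (eq_bigr (fun a => if a \in S then (1:R) else 0)); last first.
  by move=> a _; case: (a \in S); rewrite ?expr1n ?expr0n.
by rewrite -big_mkcond /= sumr_const.
Qed.

Lemma normM f : \sum_(k < #|{: Arc}|) inc_M adj_sym rho R k f ^+ 2 = #|enum_val f|%:R.
Proof. under eq_bigr do rewrite mxE. exact: normS. Qed.


Lemma normN v : \sum_(k < #|{: Arc}|) inc_N adj R k v ^+ 2 = (dg (enum_val v))%:R.
Proof.
under eq_bigr do rewrite mxE.
rewrite -(normS [set b | arc_tail b == enum_val v]).
by apply: eq_bigr => k _; rewrite inE.
Qed.

Definition Mh := col_normalize (inc_M adj_sym rho R).
Definition Nh := col_normalize (inc_N adj R).

Lemma P_entry i j : (Mh *m Mh^T) i j =
  (enum_val j \in fo (enum_val i))%:R / #|fo (enum_val i)|%:R.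
Proof.
rewrite !mxE; under eq_bigr do rewrite !mxE normM.
pose G (S : {set Arc}) := (if enum_val i \in S then (1:R) else 0) / Num.sqrt #|S|%:R *
   ((if enum_val j \in S then (1:R) else 0) / Num.sqrt #|S|%:R).
rewrite (sum_enum_val R _ (faces adj_sym rho) G).
rewrite (bigD1 (fo (enum_val i))) /=; last exact: imset_f.
rewrite big1 ?addr0; last first.
  move=> S /andP [/imsetP [c _ ->] Hne]; rewrite /G.
  case: ifP => [Hi|_]; last by rewrite !mul0r.
  by move: Hne; rewrite fo_mem in Hi; rewrite (eqP Hi) eqxx.
rewrite /G /= fo_self. rewrite sqrt_sq; last by apply/card_gt0P; exists (enum_val i); exact: fo_self.
by case: ifP; rewrite ?mul1r.
Qed.

Lemma Q_entry i j : (Nh *m Nh^T) i j =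
  (arc_tail (enum_val j) == arc_tail (enum_val i))%:R / (dg (arc_tail (enum_val i)))%:R.
Proof.
rewrite !mxE; under eq_bigr do rewrite !mxE normN.
pose G (v : V) := (if arc_tail (enum_val i) == v then (1:R) else 0) / Num.sqrt (dg v)%:R *
   ((if arc_tail (enum_val j) == v then (1:R) else 0) / Num.sqrt (dg v)%:R).
rewrite (sum_enum_valT R V G).
rewrite (bigD1 (arc_tail (enum_val i))) //=.
rewrite big1 ?addr0; last first.
  move=> v Hne; rewrite /G.
  by case: eqP => [E|_]; [by rewrite E eqxx in Hne | rewrite !mul0r].
rewrite /G /= eqxx sqrt_sq; last by apply/card_gt0P; exists (enum_val i); rewrite inE.
by case: ifP; rewrite ?mul1r.
Qed.

Lemma trP : \tr (Mh *m Mh^T) = #|faces adj_sym rho|%:R.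
Proof.
rewrite /mxtrace; under eq_bigr do rewrite P_entry fo_self /= mulr1n.
rewrite (sum_enum_valT R Arc (fun a => 1 / #|fo a|%:R)).
exact: faces_sum.
Qed.

Lemma trQ (Hs : forall v, exists a : Arc, arc_tail a = v) :
  \tr (Nh *m Nh^T) = #|V|%:R.
Proof.
rewrite /mxtrace; under eq_bigr do rewrite Q_entry eqxx /= mulr1n.
rewrite (sum_enum_valT R Arc (fun a => 1 / (dg (arc_tail a))%:R)).
exact: verts_sum.
Qed.

Lemma trPQ (Hc : circular adj_sym rho) :
  \tr ((Mh *m Mh^T) *m (Nh *m Nh^T)) =
  \sum_(a : Arc) 1 / #|fo a|%:R * (1 / (dg (arc_tail a))%:R).
Proof.
transitivity (\sum_i (Mh *m Mh^T) i i * (Nh *m Nh^T) i i).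
  apply: eq_bigr => i _; rewrite mxE (bigD1 i) //= big1 ?addr0 //.
  move=> j Hji; rewrite P_entry Q_entry.
  case Hf: (enum_val j \in fo (enum_val i)); last by rewrite !mul0r.
  case Ht: (arc_tail (enum_val i) == arc_tail (enum_val j)); last by rewrite mul0r mulr0.
  rewrite fo_mem in Hf.
  have E : i = j := enum_val_inj (circ_inj Hc _ _ (eqP Hf) (eqP Ht)).
  by rewrite E eqxx in Hji.
under eq_bigr do rewrite P_entry Q_entry fo_self eqxx /= !mulr1n.
exact: (sum_enum_valT R Arc (fun a => 1 / #|fo a|%:R * (1 / (dg (arc_tail a))%:R))).
Qed.

Lemma deg_adj v : dg v = #|[set u | adj v u]|.
Proof.
have Hi : {in [set b : Arc | arc_tail b == v] &, injective (fun b : Arc => arc_head b)}.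
  move=> a b; rewrite !inE => /eqP ta /eqP tb hab; apply: val_inj.
  move: a b ta tb hab => [[x y] ?] [[u w] ?]; rewrite /arc_tail /arc_head /= => -> -> ->.
  by [].
rewrite /deg -(card_in_imset Hi); apply: eq_card => u.
rewrite [in RHS]inE; apply/imsetP/idP => [[b]|H].
  by rewrite inE => /eqP <- ->; exact: (valP b).
by exists (exist (fun p : V * V => adj p.1 p.2) (v, u) H); rewrite ?inE.
Qed.

Lemma sum_cst (c : R) : \sum_(a : Arc) c = c * #|{: Arc}|%:R.
Proof. by rewrite sumr_const mulr_natr. Qed.

Lemma main (Hconn : connected_graph adj) (He : exists u v, adj u v)
  (Hc : circular adj_sym rho) (Hreg : regular_graph adj \/ dual_regular adj_sym rho) :
  \tr (vf_transition adj_sym rho R) =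
    2%:R * ((#|V| * #|faces adj_sym rho|)%:R / #|edges adj|%:R -
      (#|V|%:R + #|faces adj_sym rho|%:R - #|edges adj|%:R)).
Proof.
have Hs := tail_surj Hconn He.
rewrite /vf_transition /= tr_gen.
rewrite (_ : col_normalize (inc_M adj_sym rho R) = Mh) // (_ : col_normalize (inc_N adj R) = Nh) //.
rewrite trPQ // trP trQ //.
have hl := edges_sum; rewrite sum_cst in hl.
have [x [y Hxy]] := He.
pose a0 : Arc := exist (fun p : V * V => adj p.1 p.2) (x, y) Hxy.
have hA : (#|{: Arc}|%:R : R) != 0.
  by rewrite pnatr_eq0 -lt0n; apply/card_gt0P; exists a0.
rewrite natrM -hl.
case: Hreg => [[d Hd]|[k Hk]].
- have Hdg v : dg v = d by rewrite deg_adj Hd.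
  have hn := verts_sum Hs.
  rewrite (eq_bigr (fun _ => 1 / d%:R)) ?sum_cst in hn; last by move=> a _; rewrite Hdg.
  rewrite (eq_bigr (fun a => 1 / #|fo a|%:R * (1 / d%:R))); last by move=> a _; rewrite Hdg.
  rewrite -mulr_suml faces_sum -hn.
  have hd : (d%:R : R) != 0 by rewrite -(Hdg x) pnatr_eq0 -lt0n; apply/card_gt0P; exists a0; rewrite inE.
  by field; rewrite hd hA.
- have Hfo a : #|fo a| = k.
    rewrite -(Hk (fo a)) ?imset_f //; apply: eq_card => b; rewrite [in RHS]inE fo_mem eq_sym.
    by [].
  have hs := faces_sum.
  rewrite (eq_bigr (fun _ => 1 / k%:R)) ?sum_cst in hs; last by move=> a _; rewrite Hfo.
  rewrite (eq_bigr (fun a => 1 / k%:R * (1 / (dg (arc_tail a))%:R))); last by move=> a _; rewrite Hfo.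
  rewrite -mulr_sumr verts_sum // -hs.
  have hk : (k%:R : R) != 0 by rewrite -(Hfo a0) pnatr_eq0 -lt0n; apply/card_gt0P; exists a0; exact: fo_self.
  by field; rewrite hk hA.
Qed.

End S.

Theorem lemma2p3 (V : finType) (adj : rel V)
  (adj_sym : symmetric adj) (adj_irr : irreflexive adj)
  (rho : {perm Arc adj}) (R : rcfType) :
  connected_graph adj ->
  (exists u v, adj u v) ->
  rotation_system rho ->
  circular adj_sym rho ->
  (regular_graph adj \/ dual_regular adj_sym rho) ->
  let n := #|V| in
  let l := #|edges adj| in
  let s := #|faces adj_sym rho| in
  \tr (vf_transition adj_sym rho R) =
    2%:R * ((n * s)%:R / l%:R - (n%:R + s%:R - l%:R)).
Proof.
move=> Hconn He _ Hc Hreg n l s.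
exact: main.
Qed.
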